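(* Let $\mathcal{A}\subseteq\mathbb{R}^3$ and let $\varphi_1,\ldots,\varphi_N\in L^2(\mathcal{A})$ be pairwise non-parallel with $\boldsymbol{\Psi}=\int_{\mathcal{A}}\boldsymbol{\varphi}^{\mathsf{H}}\boldsymbol{\varphi}\,\mathrm{d}\mathbf{r}$ positive definite, $\boldsymbol{\varphi}(\mathbf{r})=[\varphi_1(\mathbf{r}),\ldots,\varphi_N(\mathbf{r})]$, eigendecomposition $\boldsymbol{\Psi}=\mathbf{U}\,\mathrm{diag}(\lambda_1,\ldots,\lambda_N)\mathbf{U}^{\mathsf{H}}$, $\lambda_n>0$. For Hermitian $\mathbf{M}$ let $T_{\mathbf{M}}$ be the operator on $L^2(\mathcal{A})$ with kernel $\delta(\mathbf{r}-\mathbf{r}')-\boldsymbol{\varphi}(\mathbf{r})\mathbf{M}\boldsymbol{\varphi}^{\mathsf{H}}(\mathbf{r}')$. Let $C_\varphi=T_{-\mathbf{I}_N}$, $\overline{C}_\varphi=T_{(\mathbf{I}_N+\boldsymbol{\Psi})^{-1}}$, $\overline{B}_\varphi=T_{\overline{\mathbf{B}}_{\boldsymbol\Psi}}$ with $\overline{\mathbf{B}}_{\boldsymbol\Psi}=\mathbf{U}\,\mathrm{diag}\big(\tfrac{1+\sqrt{1+\lambda_n}}{\lambda_n\sqrt{1+\lambda_n}}\big)\mathbf{U}^{\mathsf{H}}$, and $B_\varphi=T_{\mathbf{B}_{\boldsymbol\Psi}}$ with $\mathbf{B}_{\boldsymbol\Psi}=\mathbf{U}\,\mathrm{diag}\big(\tfrac{1+\sqrt{1+\lambda_n}}{\lambda_n}\big)\mathbf{U}^{\mathsf{H}}$.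 Then $\overline{B}_\varphi\overline{B}_\varphi=\overline{C}_\varphi$ and $B_\varphi B_\varphi=C_\varphi$, i.e. $\int_{\mathcal{A}}\overline{B}_\varphi(\mathbf{r}_1,\mathbf{r})\overline{B}_\varphi(\mathbf{r},\mathbf{r}_2)\,\mathrm{d}\mathbf{r}=\overline{C}_\varphi(\mathbf{r}_1,\mathbf{r}_2)$ and $\int_{\mathcal{A}}B_\varphi(\mathbf{r}_1,\mathbf{r})B_\varphi(\mathbf{r},\mathbf{r}_2)\,\mathrm{d}\mathbf{r}=C_\varphi(\mathbf{r}_1,\mathbf{r}_2)$.
   Context: Kernels containing $\delta(\mathbf{r}-\mathbf{r}')$ denote the identity plus a finite-rank integral operator. *)

(* Defs.v *)
From HB Require Import structures.
From mathcomp Require Import all_boot all_order all_algebra.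
From mathcomp Require Import complex.
From mathcomp Require Import all_classical all_reals all_analysis.
Set Implicit Arguments. Unset Strict Implicit. Unset Printing Implicit Defensive.
Import Order.TTheory GRing.Theory Num.Theory.
Local Open Scope classical_set_scope.
Local Open Scope ring_scope.

Notation R3 R :=
  ((measurableTypeR R * measurableTypeR R) * measurableTypeR R)%type.

Definition leb3 (R : realType) : {measure set (R3 R) -> \bar R} :=
  ((@lebesgue_measure R \x @lebesgue_measure R) \x @lebesgue_measure R)%E.

Definition cnorm2 (R : rcfType) (z : R[i]) : R :=
  complex.Re z ^+ 2 + complex.Im z ^+ 2.

Definition cint (R : realType) (A : set (R3 R)) (g : R3 R -> R[i]) : R[i] :=
  real_complex R (Rintegral (leb3 R) A (fun x => complex.Re (g x)))
  + complex.Complex 0 1 * real_complex R (Rintegral (leb3 R) A (fun x => complex.Im (g x))).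

Definition inL2 (R : realType) (A : set (R3 R)) (f : R3 R -> R[i]) : Prop :=
  [/\ measurable_fun A (fun x => complex.Re (f x)),
      measurable_fun A (fun x => complex.Im (f x)) &
      (\int[leb3 R]_(x in A) (cnorm2 (f x))%:E < +oo)%E].

Definition adjmx (R : rcfType) m n (M : 'M[R[i]]_(m, n)) : 'M[R[i]]_(n, m) :=
  (map_mx (@complex.conjc R) M)^T.

Definition hermitian (R : rcfType) n (M : 'M[R[i]]_n) : Prop := adjmx M = M.

Definition posdef (R : rcfType) n (M : 'M[R[i]]_n) : Prop :=
  hermitian M /\ forall v : 'cV[R[i]]_n, v != 0 -> 0 < (adjmx v *m M *m v) 0 0.

Definition unitary (R : rcfType) n (U : 'M[R[i]]_n) : Prop :=
  U *m adjmx U = 1%:M /\ adjmx U *m U = 1%:M.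

(* Gram matrix  Psi = \int_A phi^H phi dr,  Psi_{ij} = \int_A conj(phi_i) phi_j. *)
Definition gram (R : realType) N (A : set (R3 R)) (phi : 'I_N -> R3 R -> R[i])
  : 'M[R[i]]_N :=
  \matrix_(i, j) cint A (fun x => complex.conjc (phi i x) * phi j x).

(* T_M : operator on L^2(A) with kernel delta(r - r') - phi(r) M phi^H(r'):
   (T_M f)(r) = f(r) - sum_{i,j} phi_i(r) M_{ij} \int_A conj(phi_j(r')) f(r') dr'. *)
Definition Top (R : realType) N (A : set (R3 R)) (phi : 'I_N -> R3 R -> R[i])
  (M : 'M[R[i]]_N) (f : R3 R -> R[i]) : R3 R -> R[i] :=
  fun r => f r - \sum_(i < N) \sum_(j < N)
             phi i r * M i j * cint A (fun r' => complex.conjc (phi j r') * f r').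

Definition Bbar_mx (R : realType) N (U : 'M[R[i]]_N) (lam : 'I_N -> R) : 'M[R[i]]_N :=
  U *m diag_mx (\row_n real_complex R ((1 + Num.sqrt (1 + lam n))
                         / (lam n * Num.sqrt (1 + lam n)))) *m adjmx U.

Definition B_mx (R : realType) N (U : 'M[R[i]]_N) (lam : 'I_N -> R) : 'M[R[i]]_N :=
  U *m diag_mx (\row_n real_complex R ((1 + Num.sqrt (1 + lam n)) / lam n)) *m adjmx U.

(* Main.v *)
Require Import Defs.
From HB Require Import structures.
From mathcomp Require Import all_boot all_order all_algebra.
From mathcomp Require Import complex.
From mathcomp Require Import all_classical all_reals all_analysis.
From mathcomp Require Import ring lra.
Import Order.TTheory GRing.Theory Num.Theory.
Local Open Scope classical_set_scope.
Local Open Scope ring_scope.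

Section S.
Variable R : realType.
Implicit Types x y c : R[i].

Lemma ReD x y : complex.Re (x + y) = complex.Re x + complex.Re y.
Proof. by case: x => a b; case: y. Qed.
Lemma ImD x y : complex.Im (x + y) = complex.Im x + complex.Im y.
Proof. by case: x => a b; case: y. Qed.
Lemma ReN x : complex.Re (- x) = - complex.Re x.
Proof. by case: x. Qed.
Lemma ImN x : complex.Im (- x) = - complex.Im x.
Proof. by case: x. Qed.
Lemma ReM x y : complex.Re (x * y) = complex.Re x * complex.Re y - complex.Im x * complex.Im y.
Proof. by case: x => a b; case: y. Qed.
Lemma ImM x y : complex.Im (x * y) = complex.Re x * complex.Im y + complex.Im x * complex.Re y.
Proof. by case: x => a b; case: y. Qed.
Lemma ReJ x : complex.Re (complex.conjc x) = complex.Re x.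
Proof. by case: x. Qed.
Lemma ImJ x : complex.Im (complex.conjc x) = - complex.Im x.
Proof. by case: x. Qed.
Lemma Re0 : complex.Re (0 : R[i]) = 0. Proof. by []. Qed.
Lemma Im0 : complex.Im (0 : R[i]) = 0. Proof. by []. Qed.

Lemma cplx_eq x : x = real_complex R (complex.Re x) + complex.Complex 0 1 * real_complex R (complex.Im x).
Proof. case: x => a b /=; apply/eqP; rewrite eq_complex /=; apply/andP; split; apply/eqP; ring. Qed.

Lemma prod_bound (u u' v v' : R) : `|u * v| <= u ^+ 2 + u' ^+ 2 + (v ^+ 2 + v' ^+ 2).
Proof.
rewrite normrM.
have h1 : `|u| ^+ 2 = u ^+ 2 by rewrite real_normK ?num_real.
have h2 : `|v| ^+ 2 = v ^+ 2 by rewrite real_normK ?num_real.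
have : 0 <= `|u| by []. have : 0 <= `|v| by [].
nra.
Qed.

Variable A : set (R3 R).
Hypothesis mA : measurable A.
Local Notation mu := (leb3 R).

Definition cI (g : R3 R -> R[i]) :=
  mu.-integrable A (EFin \o (fun t => complex.Re (g t))) /\
  mu.-integrable A (EFin \o (fun t => complex.Im (g t))).

Lemma intZ (k : R) (f : R3 R -> R) : mu.-integrable A (EFin \o f) ->
  mu.-integrable A (EFin \o (fun t => k * f t)).
Proof. move=> h; have := integrableZl mA k h; apply: eq_integrable => // t _ /=; by rewrite EFinM. Qed.

Lemma cI_add g h : cI g -> cI h -> cI (fun t => g t + h t).
Proof.
move=> [g1 g2] [h1 h2]; split.
- apply: (eq_integrable mA _ _ _ (integrableD mA g1 h1)) => t _ /=; by rewrite ReD EFinD.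
- apply: (eq_integrable mA _ _ _ (integrableD mA g2 h2)) => t _ /=; by rewrite ImD EFinD.
Qed.

Lemma cI_opp g : cI g -> cI (fun t => - g t).
Proof.
move=> [g1 g2]; split.
- have := integrableN g1; apply: eq_integrable => // t _ /=; by rewrite ReN EFinN.
- have := integrableN g2; apply: eq_integrable => // t _ /=; by rewrite ImN EFinN.
Qed.

Lemma cI_scale c g : cI g -> cI (fun t => c * g t).
Proof.
move=> [g1 g2]; split.
- apply: (eq_integrable mA _ _ _ (integrableB mA (integrableZl mA (complex.Re c) g1) (integrableZl mA (complex.Im c) g2))) => t _ /=.
  by rewrite ReM EFinB !EFinM.
- apply: (eq_integrable mA _ _ _ (integrableD mA (integrableZl mA (complex.Re c) g2) (integrableZl mA (complex.Im c) g1))) => t _ /=.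
  by rewrite ImM EFinD !EFinM.
Qed.

Lemma cI0 : cI (fun _ => 0).
Proof. by split; apply: (eq_integrable mA _ _ _ (integrable0 mu A)) => t _. Qed.

Lemma cI_sum (I : Type) (s : seq I) (h : I -> R3 R -> R[i]) :
  (forall i, cI (h i)) -> cI (fun t => \sum_(i <- s) h i t).
Proof.
move=> hh; elim: s => [|a s IH].
  by move: cI0; congr cI; apply: funext => t; rewrite big_nil.
have := @cI_add _ _ (hh a) IH; congr cI; apply: funext => t; by rewrite big_cons.
Qed.

Lemma cint_add g h : cI g -> cI h -> cint A (fun t => g t + h t) = cint A g + cint A h.
Proof.
move=> [g1 g2] [h1 h2]; rewrite /cint.
have -> : Rintegral mu A (fun t => complex.Re (g t + h t)) = Rintegral mu A (fun t => complex.Re (g t) + complex.Re (h t)).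
  by apply: eq_Rintegral => t _; rewrite ReD.
have -> : Rintegral mu A (fun t => complex.Im (g t + h t)) = Rintegral mu A (fun t => complex.Im (g t) + complex.Im (h t)).
  by apply: eq_Rintegral => t _; rewrite ImD.
rewrite (RintegralD mA g1 h1) (RintegralD mA g2 h2) !rmorphD /=; ring.
Qed.

Lemma cint_scale c g : cI g -> cint A (fun t => c * g t) = c * cint A g.
Proof.
move=> [g1 g2]; rewrite /cint.
have -> : Rintegral mu A (fun t => complex.Re (c * g t)) = Rintegral mu A (fun t => complex.Re c * complex.Re (g t) - complex.Im c * complex.Im (g t)).
  by apply: eq_Rintegral => t _; rewrite ReM.
have -> : Rintegral mu A (fun t => complex.Im (c * g t)) = Rintegral mu A (fun t => complex.Re c * complex.Im (g t) + complex.Im c * complex.Re (g t)).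
  by apply: eq_Rintegral => t _; rewrite ImM.
rewrite (RintegralB mA (intZ _ _ g1) (intZ _ _ g2)) (RintegralD mA (intZ _ _ g2) (intZ _ _ g1)).
rewrite !RintegralZl // !rmorphB !rmorphD !rmorphM /=.
move: (Rintegral _ _ _) (Rintegral _ _ _) => a b.
case: c => p q /=; apply/eqP; rewrite eq_complex /=; apply/andP; split; apply/eqP; ring.
Qed.

Lemma cint_sum (I : Type) (s : seq I) (h : I -> R3 R -> R[i]) :
  (forall i, cI (h i)) -> cint A (fun t => \sum_(i <- s) h i t) = \sum_(i <- s) cint A (h i).
Proof.
move=> hh; elim: s => [|a s IH].
  rewrite big_nil /cint.
  have -> : Rintegral mu A (fun t => complex.Re (\sum_(i <- [::]) h i t)) = 0.
    by rewrite /Rintegral; under eq_integral do rewrite big_nil; rewrite integral0.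
  have -> : Rintegral mu A (fun t => complex.Im (\sum_(i <- [::]) h i t)) = 0.
    by rewrite /Rintegral; under eq_integral do rewrite big_nil; rewrite integral0.
  by rewrite rmorph0 mulr0 addr0.
rewrite big_cons -IH -cint_add //; last exact: cI_sum.
by congr cint; apply: funext => t; rewrite big_cons.
Qed.

Lemma cint_opp g : cI g -> cint A (fun t => - g t) = - cint A g.
Proof.
move=> hg; rewrite -mulN1r -cint_scale //; congr cint; apply: funext => t; by rewrite mulN1r.
Qed.

Local Notation MR := measurable_realfun.measurable_funM.
Local Notation DR := measurable_realfun.measurable_funD.
Local Notation XR := measurable_realfun.measurable_funX.
Local Notation EP := measurable_realfun.measurable_EFinP.

Lemma sq_int (u u' : R3 R -> R) : measurable_fun A u -> measurable_fun A u' ->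
  (\int[mu]_(x in A) (u x ^+ 2 + u' x ^+ 2)%:E < +oo)%E ->
  mu.-integrable A (EFin \o (fun t => u t ^+ 2 + u' t ^+ 2)).
Proof.
move=> mu1 mu2 fin; apply/integrableP; split.
  by apply/EP; apply: DR; apply: XR.
rewrite (_ : (\int[mu]_(x in A) _)%E = (\int[mu]_(x in A) (u x ^+ 2 + u' x ^+ 2)%:E)%E) //.
apply: eq_integral => t _ /=; by rewrite ger0_norm // addr_ge0 // sqr_ge0.
Qed.

Lemma prod_int (u u' v v' : R3 R -> R) : measurable_fun A u -> measurable_fun A u' ->
  measurable_fun A v -> measurable_fun A v' ->
  (\int[mu]_(x in A) (u x ^+ 2 + u' x ^+ 2)%:E < +oo)%E ->
  (\int[mu]_(x in A) (v x ^+ 2 + v' x ^+ 2)%:E < +oo)%E ->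
  mu.-integrable A (EFin \o (fun t => u t * v t)).
Proof.
move=> mu1 mu2 mv1 mv2 fu fv.
have iu := @sq_int _ _ mu1 mu2 fu; have iv := @sq_int _ _ mv1 mv2 fv.
have ig := integrableD mA iu iv.
apply: (le_integrable mA _ _ ig).
  by apply/EP; apply: MR.
move=> t _ /=; rewrite lee_fin.
rewrite [X in _ <= X]ger0_norm; first exact: prod_bound.
by rewrite !addr_ge0 // sqr_ge0.
Qed.

Lemma cI_L2 a b : inL2 A a -> inL2 A b -> cI (fun t => complex.conjc (a t) * b t).
Proof.
case=> ma1 ma2 fa [mb1 mb2 fb]; split.
- have h1 := @prod_int _ _ _ _ ma1 ma2 mb1 mb2 fa fb.
  have fa' : (\int[mu]_(x in A) ((complex.Im (a x)) ^+ 2 + (complex.Re (a x)) ^+ 2)%:E < +oo)%E.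
    by under eq_integral do rewrite addrC.
  have fb' : (\int[mu]_(x in A) ((complex.Im (b x)) ^+ 2 + (complex.Re (b x)) ^+ 2)%:E < +oo)%E.
    by under eq_integral do rewrite addrC.
  have h2 := @prod_int _ _ _ _ ma2 ma1 mb2 mb1 fa' fb'.
  apply: (eq_integrable mA _ _ _ (integrableD mA h1 h2)) => t _ /=.
  by rewrite ReM ReJ ImJ -EFinD mulNr opprK.
- have fa' : (\int[mu]_(x in A) ((complex.Im (a x)) ^+ 2 + (complex.Re (a x)) ^+ 2)%:E < +oo)%E.
    by under eq_integral do rewrite addrC.
  have fb' : (\int[mu]_(x in A) ((complex.Im (b x)) ^+ 2 + (complex.Re (b x)) ^+ 2)%:E < +oo)%E.
    by under eq_integral do rewrite addrC.
  have h1 := @prod_int _ _ _ _ ma1 ma2 mb2 mb1 fa fb'.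
  have h2 := @prod_int _ _ _ _ ma2 ma1 mb1 mb2 fa' fb.
  apply: (eq_integrable mA _ _ _ (integrableB mA h1 h2)) => t _ /=.
  by rewrite ImM ReJ ImJ -EFinB mulNr.
Qed.
End S.
Arguments cI {R} A g.

Section Mx.
Variable R : realType.
Variable N : nat.
Local Notation C := (R[i]).
Definition dm (e : 'I_N -> C) : 'M[C]_N := diag_mx (\row_n e n).

Lemma dmM a b : dm a *m dm b = dm (fun n => a n * b n).
Proof.
rewrite /dm mul_diag_mx; apply/matrixP => i j; rewrite !mxE.
by have [->|ne] := eqVneq i j; rewrite ?mulr1n ?mulr0n ?mulr0.
Qed.

Lemma dmD a b : dm a + dm b = dm (fun n => a n + b n).
Proof.
rewrite /dm; apply/matrixP => i j; rewrite !mxE.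
by have [->|ne] := eqVneq i j; rewrite ?mulr1n ?mulr0n ?addr0.
Qed.

Lemma dmN a : - dm a = dm (fun n => - a n).
Proof.
rewrite /dm; apply/matrixP => i j; rewrite !mxE.
by have [->|ne] := eqVneq i j; rewrite ?mulr1n ?mulr0n ?oppr0.
Qed.

Lemma dm1 : dm (fun _ => 1) = 1%:M.
Proof.
rewrite /dm; apply/matrixP => i j; rewrite !mxE.
done.
Qed.

Lemma dm_ext a b : (forall n, a n = b n) -> dm a = dm b.
Proof. by move=> h; congr diag_mx; apply/matrixP => i j; rewrite !mxE h. Qed.

Variable U : 'M[C]_N.
Hypothesis hU : unitary U.

Definition conjU (D : 'M[C]_N) := U *m D *m adjmx U.

Lemma conjUM D E : conjU D *m conjU E = conjU (D *m E).
Proof.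
case: hU => h1 h2; rewrite /conjU !mulmxA -[U *m D *m adjmx U *m U](mulmxA) h2 mulmx1.
done.
Qed.

Lemma conjUD D E : conjU D + conjU E = conjU (D + E).
Proof. by rewrite /conjU mulmxDr mulmxDl. Qed.

Lemma conjUN D : - conjU D = conjU (- D).
Proof. by rewrite /conjU mulmxN mulNmx. Qed.

Lemma conjU1 : conjU 1%:M = 1%:M.
Proof. by case: hU => h1 h2; rewrite /conjU mulmx1. Qed.
End Mx.
Arguments dm {R N} e.
Arguments conjU {R N} U D.

Section Op.
Variable R : realType.
Variable N : nat.
Local Notation C := (R[i]).
Variable A : set (R3 R).
Hypothesis mA : measurable A.
Variable phi : 'I_N -> R3 R -> C.
Hypothesis hphi : forall n, inL2 A (phi n).

Definition cvec (f : R3 R -> C) : 'cV[C]_N :=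
  \col_j cint A (fun r => complex.conjc (phi j r) * f r).
Definition Phi (v : 'cV[C]_N) (r : R3 R) : C := \sum_i phi i r * v i 0.

Lemma PhiD v w r : Phi (v + w) r = Phi v r + Phi w r.
Proof. by rewrite /Phi -big_split; apply: eq_bigr => i _; rewrite mxE mulrDr. Qed.

Lemma PhiN v r : Phi (- v) r = - Phi v r.
Proof. by rewrite /Phi -sumrN; apply: eq_bigr => i _; rewrite mxE mulrN. Qed.

Lemma Top_eq M f r : Top A phi M f r = f r - Phi (M *m cvec f) r.
Proof.
rewrite /Top /Phi; congr (_ - _); apply: eq_bigr => i _.
rewrite mxE mulr_sumr; apply: eq_bigr => j _; by rewrite mxE mulrA.
Qed.

Lemma cvec_Top M f : inL2 A f ->
  cvec (Top A phi M f) = cvec f - gram A phi *m (M *m cvec f).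
Proof.
move=> hf; apply/matrixP => k z; rewrite (ord1 z) !mxE.
set w := M *m cvec f.
have -> : (fun r => complex.conjc (phi k r) * Top A phi M f r) =
  (fun r => complex.conjc (phi k r) * f r + - \sum_(i <- index_enum 'I_N) w i 0 * (complex.conjc (phi k r) * phi i r)).
  apply: funext => r; rewrite Top_eq /Phi mulrBr mulr_sumr; congr (_ - _).
  by apply: eq_bigr => i _; rewrite -/w; ring.
have hI : forall i, cI A (fun r => w i 0 * (complex.conjc (phi k r) * phi i r)).
  by move=> i; apply: cI_scale => //; apply: cI_L2.
rewrite cint_add //; last first.
  by apply: cI_opp => //; apply: cI_sum.
  by apply: cI_L2.
rewrite cint_opp //; last by apply: cI_sum.
rewrite cint_sum //; congr (_ - _).
apply: eq_bigr => i _; rewrite cint_scale //; last by apply: cI_L2.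
by rewrite mulrC /gram !mxE.
Qed.

Lemma TT M X f r : inL2 A f -> M + M - M *m gram A phi *m M = X ->
  Top A phi M (Top A phi M f) r = Top A phi X f r.
Proof.
move=> hf hX.
rewrite Top_eq cvec_Top // Top_eq [in RHS]Top_eq -hX.
rewrite mulmxBr mulmxBl mulmxDl !PhiD !PhiN !mulmxA.
ring.
Qed.
End Op.

Lemma real_id1 (R : realType) (l : R) : 0 < l ->
  let d := (1 + Num.sqrt (1 + l)) / (l * Num.sqrt (1 + l)) in
  d + d - d * l * d = (1 + l)^-1.
Proof.
move=> l0 /=.
have s0 : 0 < Num.sqrt (1 + l) by rewrite sqrtr_gt0; lra.
have s2 : Num.sqrt (1 + l) ^+ 2 = 1 + l by rewrite sqr_sqrtr //; lra.
move: s0 s2; move: (Num.sqrt (1 + l)) => s s0 s2.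
have -> : l = s ^+ 2 - 1 by rewrite s2; ring.
have h1 : s ^+ 2 - 1 != 0 by rewrite s2 addrAC subrr add0r; apply/eqP; lra.
have h2 : s != 0 by apply/eqP; lra.
have h3 : 1 + (s ^+ 2 - 1) != 0 by rewrite s2 addrAC subrr add0r; apply/eqP; lra.
field; rewrite ?h1 ?h2 ?h3 //.
Qed.

Lemma real_id2 (R : realType) (l : R) : 0 < l ->
  let d := (1 + Num.sqrt (1 + l)) / l in
  d + d - d * l * d = -1.
Proof.
move=> l0 /=.
have s0 : 0 < Num.sqrt (1 + l) by rewrite sqrtr_gt0; lra.
have s2 : Num.sqrt (1 + l) ^+ 2 = 1 + l by rewrite sqr_sqrtr //; lra.
move: s0 s2; move: (Num.sqrt (1 + l)) => s s0 s2.
have -> : l = s ^+ 2 - 1 by rewrite s2; ring.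
have h1 : s ^+ 2 - 1 != 0 by rewrite s2 addrAC subrr add0r; apply/eqP; lra.
field; rewrite ?h1 //.
Qed.

Theorem corollary1 (R : realType) (N : nat) (A : set (R3 R))
  (phi : 'I_N -> R3 R -> R[i]) (U : 'M[R[i]]_N) (lam : 'I_N -> R) :
  measurable A ->
  (forall n, inL2 A (phi n)) ->
  (forall (m n : 'I_N), m != n -> forall c : R[i],
      ~ {ae leb3 R, forall x, A x -> phi m x = c * phi n x}) ->
  posdef (gram A phi) ->
  unitary U ->
  (forall n, 0 < lam n) ->
  gram A phi = U *m diag_mx (\row_n real_complex R (lam n)) *m adjmx U ->
  forall f : R3 R -> R[i], inL2 A f ->
  forall r, A r ->
    Top A phi (Bbar_mx U lam) (Top A phi (Bbar_mx U lam) f) r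
      = Top A phi (invmx (1%:M + gram A phi)) f r
  /\ Top A phi (B_mx U lam) (Top A phi (B_mx U lam) f) r
      = Top A phi (- 1%:M) f r.
Proof.
move=> mA hphi _ _ hU hl hG f hf r _.
have hG' : gram A phi = conjU U (dm (fun n => real_complex R (lam n))) by [].
have key : forall d : 'I_N -> R[i],
  conjU U (dm d) + conjU U (dm d) - conjU U (dm d) *m gram A phi *m conjU U (dm d)
  = conjU U (dm (fun n => d n + d n - d n * real_complex R (lam n) * d n)).
  move=> d; rewrite hG' !conjUM // !dmM conjUD // conjUN // conjUD //.
  by rewrite dmN !dmD.
split.
- apply: TT => //.
  rewrite [Bbar_mx U lam](_ : _ = conjU U (dm (fun n => real_complex R
      ((1 + Num.sqrt (1 + lam n)) / (lam n * Num.sqrt (1 + lam n)))))) //.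
  rewrite key.
  set Y := conjU U (dm (fun n => real_complex R (1 + lam n)^-1)).
  rewrite (_ : dm _ = dm (fun n => real_complex R (1 + lam n)^-1)); last first.
    apply: dm_ext => n.
    by rewrite -!rmorphM -rmorphD -rmorphB real_id1.
  have hY : (1%:M + gram A phi) *m Y = 1%:M.
    rewrite hG' -{1}(@conjU1 R N U hU) -dm1 conjUD // dmD /Y conjUM // dmM.
    rewrite (_ : dm _ = dm (fun _ => 1)); first by rewrite dm1 conjU1.
    apply: dm_ext => n; rewrite -[(1 : R[i])]/(real_complex R 1) -rmorphD -rmorphM mulfV //.
    by apply/eqP; have := hl n; lra.
  have [u _] := mulmx1_unit hY.
  by rewrite -/Y -[Y](mulKmx u) hY mulmx1.
- apply: TT => //.
  rewrite [B_mx U lam](_ : _ = conjU U (dm (fun n => real_complex R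
      ((1 + Num.sqrt (1 + lam n)) / lam n)))) //.
  rewrite key.
  rewrite (_ : dm _ = - dm (fun _ => 1)); first by rewrite -conjUN // dm1 conjU1.
  rewrite dmN; apply: dm_ext => n.
  rewrite -!rmorphM -rmorphD -rmorphB real_id2 //.
  by apply/eqP; rewrite eq_complex /= oppr0 !eqxx.
Qed.
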